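(* Let $k\geq2$ and let $W\subseteq\mathbb{Z}_{3k}$, $\overline W=\mathbb{Z}_{3k}\setminus W$, satisfy: for every $i\in\mathbb{Z}_{3k}$, $|x^i\cap W|\geq2$ and $|C^i\cap\overline W|\geq2$; and for every $i\in\overline W$, $[i+2k,i+2k+\omega(i)]_{3k}\subseteq W$. Then there exists $i\in\overline W$ with $p^i\equiv1\pmod3$.
   Context: $\mathbb{Z}_{3k}=\{0,\dots,3k-1\}$ with addition modulo $3k$; $[a,b]_{3k}$ is the cyclic closed interval from $a$ to $b$. $C^i=\{i,\dots,i+k-1\}$ (mod $3k$), $x^i=\{i,i+k,i+2k\}$. For $i\in\overline W$, $\omega(i)=\min\{t\ge0:i+k+t\in\overline W\}$. For $i\in\overline W$ the sequence $(r^i_t)_{t\ge0}$ is defined by $r^i_0=i$, $r^i_t=r^i_{t-1}+k+\omega(r^i_{t-1})$ for $t\ge1$, and $p^i=\max\{t\ge0:\sum_{j=0}^{t-1}\omega(r^i_j)\le k-1\}$. *)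

(* Defs.v *)
From mathcomp Require Import all_boot.
Set Implicit Arguments. Unset Strict Implicit. Unset Printing Implicit Defensive.

(* Z_{3k} is represented by 'I_(3*k); a natural number i stands for its
   residue i %% (3*k). W is a finite set of residues. *)
Section Defs.
Variables (k : nat) (W : {set 'I_(3 * k)}).

Definition inW (i : nat) : bool :=
  [exists j : 'I_(3 * k), (j \in W) && (val j == i %% (3 * k))].

Definition Cset (i : nat) : {set 'I_(3 * k)} :=
  [set j : 'I_(3 * k) | [exists t : 'I_k, val j == (i + t) %% (3 * k)]].

Definition xset (i : nat) : {set 'I_(3 * k)} :=
  [set j : 'I_(3 * k) | [exists t : 'I_3, val j == (i + t * k) %% (3 * k)]].

(* omega(i) = min { t >= 0 : i + k + t in Wbar }; the search is over
   t < 3k (enough, since only residues matter); it is used for i in Wbar,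
   where t = 2k is a witness. *)
Definition omega (i : nat) : nat :=
  find (fun t => ~~ inW (i + k + t)) (iota 0 (3 * k)).

Fixpoint r (i t : nat) : nat :=
  match t with
  | 0 => i %% (3 * k)
  | t'.+1 => (r i t' + k + omega (r i t')) %% (3 * k)
  end.

Definition omsum (i t : nat) : nat := \sum_(j < t) omega (r i j).

Definition is_p (i p : nat) : Prop :=
  omsum i p <= k - 1 /\ (forall t, omsum i t <= k - 1 -> t <= p).

End Defs.

(* Main.v *)
Require Import Defs.
From mathcomp Require Import all_boot.
From mathcomp Require Import zify.
Set Implicit Arguments. Unset Strict Implicit. Unset Printing Implicit Defensive.

Lemma split3 k x y : 0 < k -> x %% k = y %% k -> exists2 s, s < 3 & y %% (3*k) = (x + s * k) %% (3*k).
Proof.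
move=> k0 e.
have m0 : 0 < 3 * k by lia.
suff [s s3 h] : exists2 s, s < 3 & y %% (3*k) = (x %% (3*k) + s * k) %% (3*k) by exists s; rewrite // h modnDml.
have ex : (x %% (3*k)) %% k = x %% k by rewrite modn_dvdm // dvdn_mull.
have ey : (y %% (3*k)) %% k = y %% k by rewrite modn_dvdm // dvdn_mull.
have lx : x %% (3*k) < 3*k by rewrite ltn_mod.
have ly : y %% (3*k) < 3*k by rewrite ltn_mod.
move: ex ey lx ly; set x' := x %% (3*k); set y' := y %% (3*k) => ex ey lx ly.
have dx := divn_eq x' k; have dy := divn_eq y' k.
have ax : x' %/ k < 3 by rewrite ltn_divLR.
have ay : y' %/ k < 3 by rewrite ltn_divLR.
have ck : x' %% k < k by rewrite ltn_mod.
move: dx dy ax ay ck; rewrite ex ey -e.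
set c := x %% k; set a := x' %/ k; set b := y' %/ k => dx dy ax ay ck.
rewrite dx dy.
case: a ax dx => [|[|[|a]]] // ax dx; case: b ay dy => [|[|[|b]]] // ay dy.
- exists 0 => //; rewrite modn_small //; lia.
- exists 1 => //; rewrite modn_small //; lia.
- exists 2 => //; rewrite modn_small //; lia.
- exists 2 => //. have -> : 1 * k + c + 2 * k = c + 3 * k by lia. rewrite modnDr modn_small //; lia.
- exists 0 => //; rewrite modn_small //; lia.
- exists 1 => //; rewrite modn_small //; lia.
- exists 1 => //. have -> : 2 * k + c + 1 * k = c + 3 * k by lia. rewrite modnDr modn_small //; lia.
- exists 2 => //. have -> : 2 * k + c + 2 * k = (k + c) + 3 * k by lia. rewrite modnDr modn_small //; lia.
- exists 0 => //; rewrite modn_small //; lia.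
Qed.

Section Proof.
Variables (k : nat) (W : {set 'I_(3 * k)}).
Hypothesis k2 : 2 <= k.
Hypothesis hx : forall i : 'I_(3 * k), 2 <= #|xset k i :&: W|.
Hypothesis h4 : forall i : 'I_(3 * k), i \notin W ->
     forall t, t <= omega W i -> inW W (i + 2 * k + t).

Lemma m_gt0 : 0 < 3 * k. Proof. lia. Qed.

Lemma inW_mod n : inW W (n %% (3 * k)) = inW W n.
Proof. by rewrite /inW modn_mod. Qed.

Lemma inW_modD n c : inW W (n %% (3 * k) + c) = inW W (n + c).
Proof. by rewrite /inW modnDml. Qed.

Lemma inW_addm n : inW W (n + 3 * k) = inW W n.
Proof. by rewrite /inW modnDr. Qed.

Lemma inW_ord (i : 'I_(3 * k)) : inW W i = (i \in W).
Proof.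
apply/existsP/idP => [[j /andP[jW /eqP ji]]|iW].
- have -> : i = j by apply/val_inj => /=; rewrite ji modn_small.
  done.
- by exists i; rewrite iW modn_small /=.
Qed.

Definition ordm (n : nat) : 'I_(3 * k) := Ordinal (ltn_pmod n m_gt0).

Lemma inW_ordm n : (ordm n \in W) = inW W n.
Proof. by rewrite -inW_ord /= inW_mod. Qed.

Lemma omega_mod n : omega W (n %% (3 * k)) = omega W n.
Proof.
rewrite /omega; apply: eq_find => t /=.
by rewrite -!addnA inW_modD.
Qed.

Lemma xW (i : 'I_(3 * k)) (t1 t2 : 'I_3) : t1 != t2 ->
  inW W (i + t1 * k) || inW W (i + t2 * k).
Proof.
move=> neq; apply/negPn/negP => /norP [N1 N2].
have := hx i.
pose f := fun t : 'I_3 => ordm (i + t * k).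
have key : forall t, (f t \in W) = inW W (i + t * k) by move=> t; rewrite /f inW_ordm.
have E : xset k i :&: W \subset f @: [set t | f t \in W].
  apply/subsetP => j; rewrite !inE => /andP[/existsP[t /eqP jt] jW].
  have fj : f t = j by apply/val_inj; rewrite /= jt.
  by apply/imsetP; exists t; rewrite ?inE fj.
have F : [set t | f t \in W] \subset ~: [set t1; t2].
  apply/subsetP => t; rewrite !inE key => ftW; apply/negP => /orP[/eqP e|/eqP e]; subst t.
  - by rewrite ftW in N1.
  - by rewrite ftW in N2.
have c1 := subset_leq_card E.
have c2 := leq_imset_card f [set t | f t \in W].
have c3 := subset_leq_card F.
have c4 := cardsC [set t1; t2].
rewrite cards2 neq card_ord /= in c4.
move=> h; have h2 := leq_trans h (leq_trans c1 (leq_trans c2 c3)).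
move: h2 c4; set z := #|~: _|; lia.
Qed.

Lemma xeq a b : ~~ inW W a -> ~~ inW W b -> a %% k = b %% k -> a %% (3 * k) = b %% (3 * k).
Proof.
move=> Na Nb e.
have [s s3 hs] := split3 (ltnW k2) e.
case: s s3 hs => [|s] s3 hs; first by rewrite hs addn0.
have := xW (ordm a) (t1 := Ordinal (isT : 0 < 3)) (t2 := Ordinal s3) isT.
rewrite /= inW_modD addn0 (negbTE Na) /= inW_modD -inW_mod -hs inW_mod.
by rewrite (negbTE Nb).
Qed.

Lemma omega_spec n : ~~ inW W n ->
  [/\ omega W n < 3 * k, ~~ inW W (n + k + omega W n),
      forall s, s < omega W n -> inW W (n + k + s) & 0 < omega W n].
Proof.
move=> Nn.
pose P := fun t => ~~ inW W (n + k + t).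
have hP : has P (iota 0 (3 * k)).
  apply/hasP; exists (2 * k); first by rewrite mem_iota; lia.
  rewrite /P; have -> : n + k + 2 * k = n + 3 * k by lia.
  by rewrite inW_addm.
have lt : omega W n < 3 * k by move: hP; rewrite has_find size_iota.
have Nw : ~~ inW W (n + k + omega W n).
  have := nth_find 0 hP; rewrite nth_iota //.
have bef : forall s, s < omega W n -> inW W (n + k + s).
  move=> s hs; have := before_find 0 hs; rewrite nth_iota; last by lia.
  by rewrite /P add0n => /negbFE.
split => //.
rewrite lt0n; apply/negP => /eqP o0.
have := xW (ordm n) (t1 := Ordinal (isT : 0 < 3)) (t2 := Ordinal (isT : 1 < 3)) isT.
rewrite /= !inW_modD addn0 (negbTE Nn) /= mul1n.
by move: Nw; rewrite o0 addn0 => /negbTE ->.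
Qed.

Lemma h4' a s : ~~ inW W a -> s <= omega W a -> inW W (a + 2 * k + s).
Proof.
move=> Na hs.
have := h4 (i := ordm a); rewrite inW_ordm => /(_ Na s).
by rewrite /= omega_mod -!addnA inW_modD => ->.
Qed.

End Proof.

Theorem mainTheorem10 (k : nat) (W : {set 'I_(3 * k)}) :
  2 <= k ->
  (forall i : 'I_(3 * k), 2 <= #|xset k i :&: W|) ->
  (forall i : 'I_(3 * k), 2 <= #|Cset k i :&: ~: W|) ->
  (forall i : 'I_(3 * k), i \notin W ->
     forall t, t <= omega W i -> inW W (i + 2 * k + t)) ->
  exists2 i : 'I_(3 * k), i \notin W &
    exists p, is_p W i p /\ p %% 3 = 1.
Proof.
move=> k2 hx hC h4.
have m0 : 0 < 3 * k by lia.
have [v vN] : exists v : 'I_(3*k), v \notin W.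
  have := hC (Ordinal m0) => /(leq_trans (isT : 0 < 2)); rewrite card_gt0.
  by case/set0Pn => v; rewrite !inE => /andP[_ vN]; exists v.
have NvN : ~~ inW W v by rewrite inW_ord.
have OS := omega_spec k2 hx.
have [_ Nu _ _] := OS _ NvN.
pose u0 := ordm k2 (v + k + omega W v).
have Nu0 : ~~ inW W u0 by rewrite inW_ord /u0 inW_ordm.
pose S t := omsum W u0 t.
pose R t := r W u0 t.
have Sstep : forall t, S t.+1 = S t + omega W (R t).
  by move=> t; rewrite /S /omsum big_ord_recr.
have Rinv : forall t, R t = (u0 + t * k + S t) %% (3 * k).
  elim=> [|t IH]; first by rewrite /R /S /omsum big_ord0 /= !addn0.
  rewrite Sstep /R; have -> : r W u0 t.+1 = (r W u0 t + k + omega W (r W u0 t)) %% (3*k) by []. set w := omega W (r W u0 t).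
  rewrite -/(R t) {1}IH (mulSn t) -!addnA modnDml; congr (_ %% _); lia.
have NR : forall t, ~~ inW W (R t).
  elim=> [|t IH]; first by rewrite /R /= inW_mod.
  rewrite /R /= inW_mod -/(R t). by have [_ ? _ _] := OS _ IH.
have wpos : forall t, 0 < omega W (R t) by move=> t; have [_ _ _ ?] := OS _ (NR t).
have Sge : forall t, t <= S t.
  elim=> [|t IH] //; rewrite Sstep; have := wpos t; lia.
have Smono : forall t d, S t <= S (t + d).
  move=> t; elim=> [|d IH]; first by rewrite addn0.
  by rewrite addnS Sstep; apply: leq_trans IH (leq_addr _ _).
have ex : exists t, k <= S t by exists k; exact: Sge.
case: (ex_minnP ex) => t0 Ht0 Hmin.
case: t0 Ht0 Hmin => [|t] Ht0 Hmin.
  by move: Ht0; rewrite /S /omsum big_ord0; lia.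
have St : S t < k.
  rewrite ltnNge; apply/negP => /Hmin; lia.
pose a := R t.
have Na : ~~ inW W a := NR t.
have [_ _ befa _] := OS _ Na.
have [_ _ befv wv] := OS _ NvN.
have Skt : S t.+1 = k.
  apply/eqP; rewrite eqn_leq Ht0 andbT; apply/negP => lt.
  rewrite Sstep -/a in lt Ht0.
  pose d := k - S t.
  have d1 : 0 < d by rewrite /d; lia.
  have dw : d < omega W a by rewrite /d; lia.
  have ua : (a + d) %% k = u0 %% k.
    rewrite /a Rinv -modnDml modn_dvdm ?dvdn_mull // modnDml.
    have -> : u0 + t * k + S t + d = t.+1 * k + u0 by rewrite /d; lia.
    by rewrite modnMDl.
  have [s s3 hs] := split3 (ltnW k2) ua.
  have u0m : u0 %% (3 * k) = (v + k + omega W v) %% (3 * k) by rewrite /= modn_mod.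
  case: s s3 hs => [|[|[|s]]] // _ hs.
  - rewrite addn0 u0m in hs.
    case: (leqP d (omega W v)) => hdv.
    + have e : a = v + k + (omega W v - d) %[mod 3 * k].
        apply/eqP; rewrite -(eqn_modDr d).
        have -> : v + k + (omega W v - d) + d = v + k + omega W v by lia.
        by rewrite hs.
      have := befv (omega W v - d); rewrite -inW_mod -e inW_mod.
      have h : omega W v - d < omega W v by lia.
      by move=> /(_ h) H; rewrite H in Na.
    + have e : v = a + 2 * k + (d - omega W v) %[mod 3 * k].
        apply/eqP; rewrite -(eqn_modDr (k + omega W v)).
        have -> : a + 2 * k + (d - omega W v) + (k + omega W v) = (a + d) + 3 * k by lia.
        by rewrite modnDr addnA hs.
      have := h4' k2 h4 (s := d - omega W v) Na.
      have h : d - omega W v <= omega W a by lia.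
      rewrite -inW_mod -e inW_mod => /(_ h) H; by rewrite H in NvN.
  - have := befa d dw; rewrite -inW_mod.
    have -> : (a + k + d) %% (3 * k) = u0 %% (3 * k).
      by rewrite hs mul1n; congr (_ %% _); lia.
    rewrite inW_mod => H; by rewrite H in Nu0.
  - have := h4' k2 h4 (s := d) Na (ltnW dw); rewrite -inW_mod.
    have -> : (a + 2 * k + d) %% (3 * k) = u0 %% (3 * k).
      by rewrite hs; congr (_ %% _); lia.
    rewrite inW_mod => H; by rewrite H in Nu0.
have Rk : R t.+1 %% k = u0 %% k.
  rewrite Rinv modn_dvdm ?dvdn_mull // Skt.
  have -> : u0 + t.+1 * k + k = t.+2 * k + u0 by lia.
  by rewrite modnMDl.
have := xeq k2 hx (NR t.+1) Nu0 Rk.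
rewrite Rinv modn_mod Skt.
have -> : u0 + t.+1 * k + k = u0 + t.+2 * k by lia.
move=> hh; have : u0 + t.+2 * k == u0 + 0 %[mod 3 * k] by rewrite addn0 hh.
rewrite eqn_modDl mod0n => /eqP hd.
have h3 : 3 %| t.+2 by rewrite -(dvdn_pmul2r (ltnW k2)) /dvdn hd.
exists u0; first by rewrite -inW_ord.
exists t; split; last by move: h3; lia.
split; first by rewrite -/(S t); lia.
move=> t' ht'; rewrite leqNgt; apply/negP => lt.
move: ht'; have := Smono t.+1 (t' - t.+1); rewrite subnKC // Skt /S; lia.
Qed.
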